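(* For every function $f : X \to \mathbb{R}$ (with no measurability assumption), the game $\Gamma'(f)$ is determined.
   Context: Let $A$ be a non-empty countable set and $T$ a pruned tree on $A$ (a set of finite sequences of elements of $A$, closed under initial segments, in which every sequence has a proper extension in $T$). Let $X$ be the set of infinite branches of $T$, with the topology generated by the cylinder sets $O(s) = \{x \in X : s \text{ is an initial segment of } x\}$, $s \in T$. The game $\Gamma'(f)$: Player I and Player II alternate, Player I moving first; Player I plays $x_0, x_1, \dots \in A$ subject to $(x_0,\dots,x_t) \in T$ for all $t$, and after each move $x_t$ Player II plays a pair of reals $(v_t,w_t)$; Player II wins iff $f(x_0,x_1,\dots) = \limsup_t v_t = \liminf_t w_t$; otherwise Player I wins. Determined means one of the players has a winning strategy. *)

(* Defs.v *)
From Stdlib Require Import Reals List.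
From Coquelicot Require Import Coquelicot.
Import ListNotations.
Open Scope R_scope.

(* Finite sequences are lists, (x_0, ..., x_{n-1}) = [x_0; ...; x_{n-1}]. *)

Definition countable_set (A : Type) : Prop :=
  exists g : A -> nat, forall a b, g a = g b -> a = b.

Definition is_tree {A : Type} (T : list A -> Prop) : Prop :=
  forall s t : list A, T (s ++ t) -> T s.

(* T is pruned: every sequence in T has a proper extension in T
   (equivalently, a one-step extension, since T is closed under initial segments;
   we state it literally). *)
Definition is_pruned {A : Type} (T : list A -> Prop) : Prop :=
  forall s, T s -> exists t, t <> [] /\ T (s ++ t).

Definition prefix {A : Type} (x : nat -> A) (n : nat) : list A :=
  map x (seq 0 n).

Definition branch {A : Type} (T : list A -> Prop) (x : nat -> A) : Prop :=
  forall n, T (prefix x n).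

Definition Branches {A : Type} (T : list A -> Prop) : Type :=
  { x : nat -> A | branch T x }.

Definition hist {A : Type} (x : nat -> A) (v w : nat -> R) (n : nat)
  : list (A * (R * R)) :=
  map (fun i => (x i, (v i, w i))) (seq 0 n).

(* Strategies (full information). Player I: history -> next move x_t.
   Player II: history of previous rounds and current move x_t -> (v_t, w_t). *)
Definition stratI (A : Type) := list (A * (R * R)) -> A.
Definition stratII (A : Type) := list (A * (R * R)) -> A -> R * R.

Definition consistentI {A : Type} (s : stratI A) x v w : Prop :=
  forall n, x n = s (hist x v w n).

Definition consistentII {A : Type} (s : stratII A) x v w : Prop :=
  forall n, (v n, w n) = s (hist x v w n) (x n).

Definition II_wins_run {A : Type} (T : list A -> Prop) (f : Branches T -> R)
  (x : nat -> A) (v w : nat -> R) : Prop :=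
  forall h : branch T x,
    LimSup_seq v = Finite (f (exist _ x h)) /\
    LimInf_seq w = Finite (f (exist _ x h)).

Definition winningI {A : Type} (T : list A -> Prop) (f : Branches T -> R)
  (s : stratI A) : Prop :=
  forall x v w, consistentI s x v w -> branch T x /\ ~ II_wins_run T f x v w.

Definition winningII {A : Type} (T : list A -> Prop) (f : Branches T -> R)
  (s : stratII A) : Prop :=
  forall x v w, branch T x -> consistentII s x v w -> II_wins_run T f x v w.

Definition Gamma'_determined {A : Type} (T : list A -> Prop)
  (f : Branches T -> R) : Prop :=
  (exists s, winningI T f s) \/ (exists s, winningII T f s).

(* Main.v *)
Require Import Defs.
From Stdlib Require Import Reals List Lra Lia Classical ClassicalEpsilon FunctionalExtensionality ProofIrrelevance.
From Coquelicot Require Import Coquelicot.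
Import ListNotations.
Open Scope R_scope.

Lemma prefix_S {B : Type} (x : nat -> B) n : prefix x (S n) = prefix x n ++ [x n].
Proof. unfold prefix. rewrite seq_S, map_app. reflexivity. Qed.

Lemma prefix_length {B : Type} (x : nat -> B) n : length (prefix x n) = n.
Proof. unfold prefix. rewrite length_map, length_seq. reflexivity. Qed.

Lemma prefix_eq_pt {B : Type} (x y : nat -> B) m :
  prefix x m = prefix y m -> forall k, (k < m)%nat -> x k = y k.
Proof.
  induction m; intros H k Hk; [lia|].
  rewrite !prefix_S in H. apply app_inj_tail in H as [H1 H2].
  destruct (Nat.eq_dec k m); [subst; auto| apply IHm; auto; lia].
Qed.

Lemma prefix_pt_eq {B : Type} (x y : nat -> B) m :
  (forall k, (k < m)%nat -> x k = y k) -> prefix x m = prefix y m.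
Proof.
  induction m; intros H; [reflexivity|].
  rewrite !prefix_S. rewrite IHm by (intros; apply H; lia). rewrite H by lia. reflexivity.
Qed.

Lemma least_ex (P : nat -> Prop) : (exists n, P n) -> exists n, P n /\ forall k, (k < n)%nat -> ~ P k.
Proof.
  intros [n Hn]. revert Hn. induction n as [n IH] using (well_founded_induction Wf_nat.lt_wf).
  intros Hn. destruct (classic (exists k, (k < n)%nat /\ P k)) as [[k [Hk1 Hk2]]|Hno].
  - exact (IH k Hk1 Hk2).
  - exists n. split; auto. intros k Hk HP. apply Hno; eauto.
Qed.

Section Main.
Variable A : Type.
Variable T : list A -> Prop.
Variable f : Branches T -> R.

Inductive Good (e : R) : list A -> Type :=
| good_mk : forall (s : list A) (c : R) (U : list A -> Prop),
   (forall x (hx : branch T x), prefix x (length s) = s ->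
      (forall m, (length s < m)%nat -> ~ U (prefix x m)) ->
      Rabs (f (exist _ x hx) - c) <= e) ->
   (forall u, U u -> Good e u) -> Good e s.

Definition gval {e s} (g : Good e s) : R := match g with good_mk _ c _ _ _ => c end.
Definition gU {e s} (g : Good e s) : list A -> Prop := match g with good_mk _ _ U _ _ => U end.
Definition gsub {e s} (g : Good e s) : forall u, gU g u -> Good e u :=
  match g as g0 return forall u, gU g0 u -> Good e u with good_mk _ _ _ _ sub => sub end.

Lemma gH {e s} (g : Good e s) : forall x (hx : branch T x), prefix x (length s) = s ->
      (forall m, (length s < m)%nat -> ~ gU g (prefix x m)) ->
      Rabs (f (exist _ x hx) - gval g) <= e.
Proof. destruct g; simpl; auto. Qed.

Definition step {e} (st : sigT (Good e)) (u : list A) : sigT (Good e) :=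
  match excluded_middle_informative (gU (projT2 st) u) with
  | left H => existT _ u (gsub (projT2 st) u H)
  | right _ => st
  end.

Lemma step_no {e} st u : ~ gU (projT2 st) u -> @step e st u = st.
Proof. intros H. unfold step. destruct excluded_middle_informative; tauto. Qed.

Lemma step_yes {e} st u (H : gU (projT2 st) u) : exists H', @step e st u = existT _ u (gsub (projT2 st) u H').
Proof. unfold step. destruct excluded_middle_informative; [eauto|tauto]. Qed.

Lemma good_conv e (x : nat -> A) (hx : branch T x) (st : nat -> sigT (Good e))
  (Hst : forall t, st (S t) = step (st t) (prefix x (S t))) :
  forall s (g : Good e s) t0, st t0 = existT _ s g -> (length s <= t0)%nat ->
    prefix x (length s) = s ->
    (forall m, (length s < m <= t0)%nat -> ~ gU g (prefix x m)) ->
    exists N c, Rabs (f (exist _ x hx) - c) <= e /\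
       forall t, (N <= t)%nat -> gval (projT2 (st t)) = c.
Proof.
  intros s g. induction g as [s c U H sub IH]; intros t0 Ht0 Hl Hp Hinv; simpl in Hinv.
  destruct (classic (exists m, (t0 < m)%nat /\ U (prefix x m))) as [Hex|Hno].
  - apply least_ex in Hex as [m [[Hm1 Hm2] Hmin]].
    assert (Hc : forall k, (t0 + k < m)%nat -> st (t0 + k)%nat = existT _ s (good_mk e s c U H sub)).
    { induction k; intros Hk. rewrite Nat.add_0_r; auto.
      rewrite Nat.add_succ_r, Hst, IHk by lia. apply step_no. simpl.
      intros HU. apply (Hmin (S (t0 + k))); [lia|]. split; [lia|auto]. }
    assert (Hsm : st m = existT _ (prefix x m) (sub (prefix x m) Hm2)).
    { destruct m as [|m']; [lia|]. rewrite Hst.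
      assert (Hc' := Hc (m' - t0)%nat). replace (t0 + (m' - t0))%nat with m' in Hc' by lia.
      rewrite Hc' by lia.
      destruct (step_yes (existT _ s (good_mk e s c U H sub)) (prefix x (S m')) Hm2) as [H' ->].
      simpl. f_equal. f_equal. apply proof_irrelevance. }
    eapply (IH (prefix x m) Hm2 m Hsm); rewrite prefix_length; auto. lia.
  - exists t0, c. split.
    + apply (H x hx Hp). intros m Hm HU.
      destruct (Nat.le_gt_cases m t0).
      * apply (Hinv m); auto.
      * apply Hno; eauto.
    + assert (Hc : forall k, st (t0 + k)%nat = existT _ s (good_mk e s c U H sub)).
      { induction k. rewrite Nat.add_0_r; auto.
        rewrite Nat.add_succ_r, Hst, IHk. apply step_no. simpl.
        intros HU. apply Hno. exists (S (t0 + k)). split; [lia|auto]. }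
      intros t Ht. replace t with (t0 + (t - t0))%nat by lia. rewrite Hc. reflexivity.
Qed.

Definition Bad e s := T s /\ ~ inhabited (Good e s).

Lemma bad_far e s : Bad e s -> forall c, exists x (hx : branch T x),
  prefix x (length s) = s /\ (forall m, (length s <= m)%nat -> Bad e (prefix x m)) /\
  e < Rabs (f (exist _ x hx) - c).
Proof.
  intros [HTs HB] c. apply NNPP. intros Hn. apply HB. constructor.
  apply (good_mk e s c (fun u => inhabited (Good e u))).
  - intros x hx Hp Hm. apply Rnot_lt_le. intros Hlt. apply Hn. exists x, hx.
    split; auto. split; auto. intros m Hm'. split; [apply hx|].
    destruct (Nat.eq_dec m (length s)) as [->|]. rewrite Hp. auto.
    apply Hm. lia.
  - intros u Hu. exact (epsilon Hu (fun _ => True)).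
Qed.

Lemma good_of_notT e : ~ T [] -> inhabited (Good e []).
Proof.
  intros HT. constructor. apply (good_mk e [] 0 (fun _ => False)).
  - intros x hx. exfalso. apply HT. exact (hx 0%nat).
  - intros u [].
Qed.

Section IStrat.
Variable e : R.
Variable p0 : Branches T.
Let d := e / 4.

Definition spec (p : Branches T) (t : nat) (q : Branches T) : Prop :=
  prefix (proj1_sig q) t = prefix (proj1_sig p) t /\
  (forall m, (t <= m)%nat -> Bad e (prefix (proj1_sig q) m)) /\
  e < Rabs (f q - f p).

Definition newt (p : Branches T) (t : nat) : Branches T :=
  epsilon (inhabits p) (spec p t).

Lemma newt_spec p t : Bad e (prefix (proj1_sig p) t) -> spec p t (newt p t).
Proof.
  intros Hb. unfold newt. apply epsilon_spec.
  destruct (bad_far e _ Hb (f p)) as [x [hx [H1 [H2 H3]]]].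
  rewrite prefix_length in *. exists (exist _ x hx). split; [|split]; auto.
Qed.

Definition upd (st : Branches T * bool) (t : nat) (vv ww : R) : Branches T * bool :=
  let (p, ph) := st in
  if ph then (if Rlt_dec (f p - d) vv then (p, false) else (p, true))
  else (if Rlt_dec ww (f p + d) then (newt p (S t), true) else (p, false)).

Fixpoint auxI (r : list (A * (R * R))) : Branches T * bool :=
  match r with
  | [] => (p0, true)
  | h :: r' => upd (auxI r') (length r') (fst (snd h)) (snd (snd h))
  end.

Definition sigmaI : stratI A := fun h => proj1_sig (fst (auxI (rev h))) (length h).

Lemma hist_S (x : nat -> A) v w t : hist x v w (S t) = hist x v w t ++ [(x t, (v t, w t))].
Proof. unfold hist. rewrite seq_S, map_app. reflexivity. Qed.

Lemma hist_length (x : nat -> A) v w t : length (hist x v w t) = t.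
Proof. unfold hist. rewrite length_map, length_seq. reflexivity. Qed.

Lemma auxI_S x v w t : auxI (rev (hist x v w (S t))) = upd (auxI (rev (hist x v w t))) t (v t) (w t).
Proof.
  rewrite hist_S, rev_app_distr. simpl. rewrite length_rev, hist_length. reflexivity.
Qed.


Hypothesis He : 0 < e.
Hypothesis Hp0 : forall m, Bad e (prefix (proj1_sig p0) m).

Definition swc (st : Branches T * bool) (ww : R) := snd st = false /\ ww < f (fst st) + d.

Lemma upd_sw st t vv ww : swc st ww -> upd st t vv ww = (newt (fst st) (S t), true).
Proof.
  destruct st as [p ph]; unfold swc; simpl. intros [H0 H]. subst. destruct Rlt_dec; [reflexivity|contradiction].
Qed.

Lemma upd_nosw st t vv ww : ~ swc st ww -> fst (upd st t vv ww) = fst st.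
Proof.
  destruct st as [p ph]; unfold swc; simpl. intros H. destruct ph.
  - destruct Rlt_dec; reflexivity.
  - destruct Rlt_dec; [exfalso; apply H; auto|reflexivity].
Qed.

Lemma upd_true st t vv ww : snd st = true ->
  upd st t vv ww = (fst st, if Rlt_dec (f (fst st) - d) vv then false else true).
Proof. destruct st as [p ph]; simpl. intros H0; subst. destruct Rlt_dec; reflexivity. Qed.

Lemma upd_false_nosw st t vv ww : snd st = false -> ~ swc st ww -> upd st t vv ww = (fst st, false).
Proof.
  destruct st as [p ph]; unfold swc; simpl. intros H0 H; subst.
  destruct Rlt_dec; [exfalso; apply H; auto|reflexivity].
Qed.

Lemma branch_eq (x : nat -> A) (h : branch T x) (p : Branches T) :
  (forall t, x t = proj1_sig p t) -> exist _ x h = p.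
Proof.
  intros H. destruct p as [px hp]. simpl in H.
  assert (x = px) by (apply functional_extensionality; auto). subst.
  f_equal. apply proof_irrelevance.
Qed.

Lemma I_wins : winningI T f sigmaI.
Proof.
  intros x v w Hc.
  set (st := fun t => auxI (rev (hist x v w t))).
  assert (Hst : forall t, st (S t) = upd (st t) t (v t) (w t)) by (intros; apply auxI_S).
  assert (Hx : forall t, x t = proj1_sig (fst (st t)) t).
  { intros t. rewrite (Hc t). unfold sigmaI, st. rewrite hist_length. reflexivity. }
  assert (Inv : forall t, prefix (proj1_sig (fst (st t))) t = prefix x t /\
            forall m, (t <= m)%nat -> Bad e (prefix (proj1_sig (fst (st t))) m)).
  { induction t as [|t [IH1 IH2]].
    - split; [reflexivity|]. intros m _. apply Hp0.
    - assert (Hpre : prefix (proj1_sig (fst (st t))) (S t) = prefix x (S t)).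
      { rewrite !prefix_S, IH1, <- Hx. reflexivity. }
      rewrite Hst. destruct (classic (swc (st t) (w t))) as [Hs|Hs].
      + rewrite upd_sw by auto. simpl.
        destruct (newt_spec (fst (st t)) (S t) (IH2 (S t) ltac:(lia))) as [S1 [S2 S3]].
        split; [congruence|auto].
      + rewrite upd_nosw by auto. split; auto. intros m Hm; apply IH2; lia. }
  assert (Hbr : branch T x).
  { intros n. destruct (Inv n) as [I1 I2]. rewrite <- I1. apply (I2 n (le_n n)). }
  split; [exact Hbr|]. intros HW. destruct (HW Hbr) as [Hsup Hinf].
  set (L := f (exist _ x Hbr)) in *.
  destruct (ex_LimSup_seq v) as [l1 Hl1]. rewrite (is_LimSup_seq_unique _ _ Hl1) in Hsup. subst l1.
  destruct (ex_LimInf_seq w) as [l2 Hl2]. rewrite (is_LimInf_seq_unique _ _ Hl2) in Hinf. subst l2.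
  assert (Hd : 0 < d) by (unfold d; lra).
  set (dp := mkposreal d Hd).
  destruct (classic (exists N, forall t, (N <= t)%nat -> ~ swc (st t) (w t))) as [[N HN]|Hinfsw].
  -
    assert (Hconst : forall k, fst (st (N + k)%nat) = fst (st N)).
    { induction k. rewrite Nat.add_0_r; auto. rewrite Nat.add_succ_r, Hst, upd_nosw; auto. apply HN; lia. }
    assert (Hxp : forall t, x t = proj1_sig (fst (st N)) t).
    { intros t. destruct (Nat.le_gt_cases N t).
      - rewrite Hx. replace t with (N + (t - N))%nat at 1 by lia. rewrite Hconst. reflexivity.
      - destruct (Inv N) as [I1 _]. symmetry. apply (prefix_eq_pt _ _ N I1). auto. }
    assert (HL : L = f (fst (st N))) by (unfold L; f_equal; apply branch_eq; auto).
    destruct (classic (forall k, snd (st (N + k)%nat) = true)) as [Hall|Hex].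
    + destruct (proj1 (Hl1 dp) N) as [n [Hn1 Hn2]]. simpl in Hn2.
      assert (Hk := Hall (S (n - N))).
      replace (N + S (n - N))%nat with (S n) in Hk by lia.
      rewrite Hst, upd_true in Hk by (replace n with (N + (n - N))%nat by lia; auto).
      simpl in Hk. destruct Rlt_dec as [Hr|Hr]; [discriminate|].
      replace n with (N + (n - N))%nat in Hr by lia. rewrite Hconst in Hr.
      replace (N + (n - N))%nat with n in Hr by lia. lra.
    + apply not_all_ex_not in Hex as [k Hk]. apply Bool.not_true_is_false in Hk.
      assert (Hf : forall j, snd (st (N + k + j)%nat) = false).
      { induction j. rewrite Nat.add_0_r; auto.
        rewrite Nat.add_succ_r, Hst, upd_false_nosw; auto. apply HN; lia. }
      destruct (proj1 (Hl2 dp) (N + k)%nat) as [n [Hn1 Hn2]]. simpl in Hn2.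
      apply (HN n); [lia|]. split.
      * replace n with (N + k + (n - (N + k)))%nat by lia. apply Hf.
      * replace n with (N + (n - N))%nat in * by lia. rewrite Hconst, <- HL. lra.
  -
    destruct (proj2 (Hl1 dp)) as [N1 HN1]. destruct (proj2 (Hl2 dp)) as [N2 HN2]. simpl in *.
    set (Nm := Nat.max N1 N2).
    assert (entryB : forall t, snd (st t) = false -> exists t', (t' < t)%nat /\
              f (fst (st t)) - d < v t' /\
              forall j, (t' < j <= t)%nat -> snd (st j) = false).
    { induction t as [|t IH]; intros Ht.
      - unfold st in Ht. simpl in Ht. discriminate.
      - rewrite Hst in Ht. destruct (snd (st t)) eqn:Ep.
        + rewrite upd_true in Ht by auto. simpl in Ht. destruct Rlt_dec as [Hr|Hr]; [|discriminate].
          exists t. split; [lia|]. split.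
          * rewrite Hst, upd_true by auto. simpl. exact Hr.
          * intros j Hj. replace j with (S t) by lia. rewrite Hst, upd_true by auto. simpl.
            destruct Rlt_dec; [reflexivity|contradiction].
        + destruct (classic (swc (st t) (w t))) as [Hs|Hs].
          * rewrite upd_sw in Ht by auto. discriminate.
          * destruct (IH eq_refl) as [t' [T1 [T2 T3]]]. exists t'. split; [lia|]. split.
            -- rewrite Hst, upd_nosw by auto. exact T2.
            -- intros j Hj. destruct (Nat.eq_dec j (S t)).
               ++ subst. rewrite Hst, upd_false_nosw by auto. reflexivity.
               ++ apply T3. lia. }
    assert (near : forall t t0, swc (st t) (w t) -> (Nm <= t0 <= t)%nat -> snd (st t0) = true ->
               Rabs (f (fst (st t)) - L) < 2 * d).
    { intros t t0 [Hs1 Hs2] Ht0 Hph. destruct (entryB t Hs1) as [t' [T1 [T2 T3]]].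
      assert (Nm <= t')%nat.
      { destruct (Nat.le_gt_cases t0 t'); [lia|]. rewrite (T3 t0) in Hph by lia. discriminate. }
      assert (v t' < L + d) by (apply HN1; unfold Nm in *; lia).
      assert (L - d < w t) by (apply HN2; unfold Nm in *; lia).
      apply Rabs_def1; lra. }
    assert (constb : forall a k, (forall j, (a <= j < a + k)%nat -> ~ swc (st j) (w j)) ->
               fst (st (a + k)%nat) = fst (st a)).
    { intros a k. induction k; intros H. rewrite Nat.add_0_r; auto.
      rewrite Nat.add_succ_r, Hst, upd_nosw. apply IHk; intros; apply H; lia. apply H; lia. }
    assert (leastsw : forall a, exists t, (a <= t)%nat /\ swc (st t) (w t) /\
               forall j, (a <= j < t)%nat -> ~ swc (st j) (w j)).
    { intros a. destruct (least_ex (fun t => (a <= t)%nat /\ swc (st t) (w t))) as [t [[Ht1 Ht2] Ht3]].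
      - apply NNPP. intros Hno. apply Hinfsw. exists a. intros t Ht Hs. apply Hno. exists t. auto.
      - exists t. split; auto. split; auto. intros j Hj Hs. apply (Ht3 j); [lia|]. split; [lia|auto]. }
    destruct (leastsw Nm) as [t1 [T11 [T12 _]]].
    destruct (leastsw (S t1)) as [t2 [T21 [T22 T23]]].
    destruct (leastsw (S t2)) as [t3 [T31 [T32 T33]]].
    assert (Ph1 : snd (st (S t1)) = true) by (rewrite Hst, upd_sw by auto; reflexivity).
    assert (Ph2 : snd (st (S t2)) = true) by (rewrite Hst, upd_sw by auto; reflexivity).
    assert (N2' := near t2 (S t1) T22 ltac:(lia) Ph1).
    assert (N3' := near t3 (S t2) T32 ltac:(lia) Ph2).
    assert (E3 : fst (st t3) = newt (fst (st t2)) (S t2)).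
    { assert (H := constb (S t2) (t3 - S t2)%nat ltac:(intros; apply T33; lia)).
      replace (S t2 + (t3 - S t2))%nat with t3 in H by lia. rewrite H, Hst, upd_sw by auto. reflexivity. }
    destruct (Inv t2) as [_ I2].
    destruct (newt_spec (fst (st t2)) (S t2) (I2 (S t2) ltac:(lia))) as [_ [_ S3]].
    rewrite <- E3 in S3.
    assert (Rabs (f (fst (st t3)) - f (fst (st t2))) < e).
    { apply Rabs_def1; apply Rabs_def2 in N2'; apply Rabs_def2 in N3'; unfold d in *; lra. }
    lra.
Qed.
End IStrat.

Definition E (n : nat) : R := (/2)^n.
Lemma E_pos n : 0 < E n.
Proof. unfold E. apply pow_lt. lra. Qed.
Lemma E_S n : E (S n) = E n / 2.
Proof. unfold E. simpl. lra. Qed.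

Fixpoint sumR (dd : nat -> R) (k : nat) : R :=
  match k with O => 0 | S k' => sumR dd k' + dd k' end.

Lemma sumR_ext d1 d2 k : (forall n, (n < k)%nat -> d1 n = d2 n) -> sumR d1 k = sumR d2 k.
Proof. induction k; intros H; simpl; auto. rewrite IHk by (intros; apply H; lia). rewrite H by lia. reflexivity. Qed.

Lemma sumR_split dd N j : sumR dd (N + j) = sumR dd N + sumR (fun i => dd (N + i)%nat) j.
Proof. induction j; simpl. rewrite Nat.add_0_r; lra. rewrite Nat.add_succ_r. simpl. rewrite IHj. lra. Qed.

Lemma sumR_tele (c : nat -> R) N : sumR (fun n => c (S n) - c n) N = c N - c O.
Proof. induction N; simpl. lra. rewrite IHN. lra. Qed.

Lemma sumR_abs dd b j : (forall i, (i < j)%nat -> Rabs (dd i) <= b i) -> Rabs (sumR dd j) <= sumR b j.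
Proof.
  induction j; intros H; simpl. rewrite Rabs_R0. lra.
  eapply Rle_trans; [apply Rabs_triang|]. apply Rplus_le_compat; [apply IHj; intros; apply H; lia| apply H; lia].
Qed.

Lemma geom N j : sumR (fun i => 2 * E (N + i)%nat) j = 4 * E N - 4 * E (N + j)%nat.
Proof.
  induction j; simpl. rewrite Nat.add_0_r. lra.
  rewrite IHj, Nat.add_succ_r, E_S. lra.
Qed.

Definition clip n z := Rmax (- (2 * E n)) (Rmin (2 * E n) z).
Lemma clip_bound n z : Rabs (clip n z) <= 2 * E n.
Proof.
  assert (H := E_pos n). apply Rabs_le. unfold clip, Rmax, Rmin.
  repeat destruct Rle_dec; lra.
Qed.
Lemma clip_id n z : Rabs z <= 2 * E n -> clip n z = z.
Proof.
  intros H. apply Rabs_le_between in H. unfold clip, Rmax, Rmin.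
  repeat destruct Rle_dec; lra.
Qed.

Section IIStrat.
Hypothesis hG : forall n, inhabited (Good (E n) []).

Definition g0 n : Good (E n) [] := epsilon (hG n) (fun _ => True).

Fixpoint aux n (r : list A) : sigT (Good (E n)) :=
  match r with
  | [] => existT _ [] (g0 n)
  | a :: r' => step (aux n r') (rev (a :: r'))
  end.

Definition runL n (u : list A) := aux n (rev u).

Lemma runL_S n (x : nat -> A) t : runL n (prefix x (S t)) = step (runL n (prefix x t)) (prefix x (S t)).
Proof.
  unfold runL. rewrite prefix_S at 1. rewrite rev_app_distr. simpl.
  rewrite rev_involutive, <- prefix_S. reflexivity.
Qed.

Definition val n u := gval (projT2 (runL n u)).

Definition comb (u : list A) : R :=
  val O u + sumR (fun n => clip n (val (S n) u - val n u)) (length u).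

Definition sigmaII : stratII A := fun h a => let u := map fst h ++ [a] in (comb u, comb u).

Lemma comb_conv (x : nat -> A) (hx : branch T x) :
  is_lim_seq (fun t => comb (prefix x (S t))) (f (exist _ x hx)).
Proof.
  set (L := f (exist _ x hx)).
  assert (H1 : forall n, exists c, Rabs (L - c) <= E n /\ exists Tn, forall t, (Tn <= t)%nat -> val n (prefix x t) = c).
  { intros n.
    destruct (good_conv (E n) x hx (fun t => runL n (prefix x t)) (fun t => runL_S n x t) [] (g0 n) O)
      as [Tn [c [Hc1 Hc2]]]; auto.
    - intros m Hm. simpl in Hm. lia.
    - exists c. split; auto. exists Tn. exact Hc2. }
  set (cf := fun n => proj1_sig (constructive_indefinite_description _ (H1 n))).
  assert (Hcf : forall n, Rabs (L - cf n) <= E n /\ exists Tn, forall t, (Tn <= t)%nat -> val n (prefix x t) = cf n).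
  { intros n. unfold cf. destruct constructive_indefinite_description. simpl. auto. }
  assert (Hmax : forall N, exists Tm, forall n t, (n <= N)%nat -> (Tm <= t)%nat -> val n (prefix x t) = cf n).
  { induction N.
    - destruct (proj2 (Hcf O)) as [T0 H0]. exists T0. intros n t Hn Ht. replace n with O by lia. auto.
    - destruct IHN as [Tm HTm]. destruct (proj2 (Hcf (S N))) as [T0 H0]. exists (Nat.max Tm T0).
      intros n t Hn Ht. destruct (Nat.eq_dec n (S N)) as [->|]. apply H0; lia. apply HTm; lia. }
  apply is_lim_seq_spec. intros eps.
  destruct (pow_lt_1_zero (/2) ltac:(rewrite Rabs_pos_eq; lra) (eps / 5) ltac:(destruct eps; simpl; lra)) as [N HN].
  assert (HEN : E N < eps / 5) by (assert (H := HN N (le_n N)); rewrite Rabs_pos_eq in H; [exact H| apply Rlt_le, E_pos]).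
  destruct (Hmax N) as [Tm HTm].
  exists (Nat.max Tm N). intros t Ht.
  set (u := prefix x (S t)).
  assert (Hval : forall n, (n <= N)%nat -> val n u = cf n) by (intros; apply HTm; lia).
  unfold comb. replace (length u) with (S t) by (unfold u; rewrite prefix_length; reflexivity).
  replace (S t) with (N + (S t - N))%nat by lia.
  rewrite sumR_split.
  rewrite (sumR_ext _ (fun n => cf (S n) - cf n)).
  2:{ intros n Hn. rewrite !Hval by lia. apply clip_id.
      destruct (Hcf n) as [Ha _]. destruct (Hcf (S n)) as [Hb _]. rewrite E_S in Hb.
      apply Rabs_le_between in Ha. apply Rabs_le_between in Hb. assert (H := E_pos n).
      apply Rabs_le. lra. }
  rewrite sumR_tele, Hval by lia.
  assert (Ht1 := sumR_abs (fun i => clip (N + i) (val (S (N + i)) u - val (N + i) u)) (fun i => 2 * E (N + i)%nat) (S t - N)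
    ltac:(intros; apply clip_bound)).
  rewrite geom in Ht1. assert (Hp := E_pos (N + (S t - N))).
  destruct (Hcf N) as [HcN _]. apply Rabs_le_between in HcN. apply Rabs_le_between in Ht1.
  apply Rabs_def1; lra.
Qed.

Lemma II_wins : winningII T f sigmaII.
Proof.
  intros x v w hx Hc h.
  assert (Hv : forall t, v t = comb (prefix x (S t)) /\ w t = comb (prefix x (S t))).
  { intros t. assert (H := Hc t). unfold sigmaII in H.
    replace (map fst (hist x v w t) ++ [x t]) with (prefix x (S t)) in H.
    - injection H; auto.
    - rewrite prefix_S. f_equal. unfold hist, prefix. rewrite map_map. reflexivity. }
  assert (Hl := comb_conv x h).
  assert (Hlv : is_lim_seq v (f (exist _ x h))) by (eapply is_lim_seq_ext; [|exact Hl]; intros; symmetry; apply Hv).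
  assert (Hlw : is_lim_seq w (f (exist _ x h))) by (eapply is_lim_seq_ext; [|exact Hl]; intros; symmetry; apply Hv).
  split.
  - apply is_LimSup_seq_unique. apply is_lim_LimSup_seq. exact Hlv.
  - apply is_LimInf_seq_unique. apply is_lim_LimInf_seq. exact Hlw.
Qed.
End IIStrat.
End Main.

Theorem mainTheorem18 (A : Type) (a0 : A) (HA : countable_set A)
  (T : list A -> Prop) (HT : is_tree T) (HP : is_pruned T)
  (f : Branches T -> R) :
  Gamma'_determined T f.
Proof.
  unfold Gamma'_determined.
  destruct (classic (forall n, inhabited (Good A T f (E n) []))) as [hG|hG].
  - right. exists (sigmaII A T f hG). apply II_wins.
  - left. apply not_all_ex_not in hG as [n Hn].
    set (e := E n). assert (He : 0 < e) by apply E_pos.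
    assert (HT0 : T []) by (apply NNPP; intros H; apply Hn; apply good_of_notT; auto).
    assert (Hb : Bad A T f e []) by (split; auto).
    destruct (bad_far A T f e [] Hb 0) as [p [hp [_ [Hp _]]]].
    exists (sigmaI A T f e (exist _ p hp)). apply I_wins; auto.
    intros m. apply Hp. simpl. lia.
Qed.
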